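(* Let $d \geq 2$ and let $\hat{\mathbf{\Sigma}}_1,\ldots,\hat{\mathbf{\Sigma}}_K \in \mathbb{R}^{d\times d}$ be symmetric positive semi-definite matrices such that \[ \lambda_1(\hat{\mathbf{\Sigma}}_j) \geq \frac{\sum_{k=1}^K\sum_{i=2}^d \lambda_i(\hat{\mathbf{\Sigma}}_k)}{K(d-1)} \quad \text{for all } j\in\{1,\ldots,K\}. \] Then a solution of \[ \min_{\hat{\mathbf{x}}_1,\ldots,\hat{\mathbf{x}}_K \in \mathbb{R}^d,\ \hat{\sigma}^2} \ \sum_{k=1}^K \big\|\hat{\mathbf{\Sigma}}_k - (\hat{\mathbf{x}}_k\hat{\mathbf{x}}_k^\mathrm{T} + \hat{\sigma}^2 \mathbf{I})\big\|_\mathrm{F}^2 \] is given by \[ \sigma^2_{\mathrm{GMM}} = \frac{1}{K}\sum_{k=1}^K \frac{\mathrm{tr}(\hat{\mathbf{\Sigma}}_k) - \lambda_1(\hat{\mathbf{\Sigma}}_k)}{d-1},\qquad \mathbf{x}_{\mathrm{GMM},k} = \sqrt{\lambda_1(\hat{\mathbf{\Sigma}}_k) - \sigma^2_{\mathrm{GMM}}}\ \mathbf{v}_1(\hat{\mathbf{\Sigma}}_k)\quad (k=1,\ldots,K), \] where $\mathbf{v}_1(\hat{\mathbf{\Sigma}}_k)$ is a unit eigenvector associated with $\lambda_1(\hat{\mathbf{\Sigma}}_k)$.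
   Context: $\lambda_i(\mathbf{M})$ denotes the $i$-th largest eigenvalue of a symmetric positive semi-definite matrix $\mathbf{M}$ (equal to its $i$-th largest singular value); $\mathbf{I}$ is the $d\times d$ identity; $\|\cdot\|_\mathrm{F}$ is the Frobenius norm. *)

(* Defs.v *)
From HB Require Import structures.
From mathcomp Require Import all_boot all_order all_algebra.
From mathcomp Require Import reals.
From mathcomp Require Import polyrcf.
Set Implicit Arguments. Unset Strict Implicit. Unset Printing Implicit Defensive.
Import Order.TTheory GRing.Theory Num.Theory.
Local Open Scope ring_scope.

(* For a symmetric matrix
   all eigenvalues are real, so this list has size d. *)
Definition eigs (R : realType) (d : nat) (A : 'M[R]_d) : seq R :=
  let p := char_poly A in
  sort (fun x y : R => y <= x) (flatten [seq nseq (mup x p) x | x <- rootsR p]).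

(* lambda_i(A), 1-indexed: the i-th largest eigenvalue. *)
Definition lambda (R : realType) (d : nat) (A : 'M[R]_d) (i : nat) : R :=
  nth 0 (eigs A) i.-1.

Definition sym_mx (R : realType) (d : nat) (A : 'M[R]_d) : Prop :=
  A^T = A.

Definition psd (R : realType) (d : nat) (A : 'M[R]_d) : Prop :=
  forall x : 'cV[R]_d, 0 <= (x^T *m A *m x) 0 0.

Definition frob2 (R : realType) (m n : nat) (A : 'M[R]_(m, n)) : R :=
  \sum_(i < m) \sum_(j < n) A i j ^+ 2.

Definition norm2 (R : realType) (d : nat) (v : 'cV[R]_d) : R :=
  \sum_(i < d) v i 0 ^+ 2.

Definition gmm_obj (R : realType) (d K : nat) (S : 'I_K -> 'M[R]_d)
    (x : 'I_K -> 'cV[R]_d) (s : R) : R :=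
  \sum_(k < K) frob2 (S k - (x k *m (x k)^T + s%:M)).

(* Main.v *)
Require Import Defs.
From HB Require Import structures.
From mathcomp Require Import all_boot all_order all_algebra.
From mathcomp Require Import reals.
From mathcomp Require Import polyrcf.
From mathcomp Require Import complex spectral sesquilinear ring lra.
Import Order.TTheory GRing.Theory Num.Theory.
Local Open Scope ring_scope.
Lemma char_poly_simil (F : fieldType) n (P B : 'M[F]_n) : P \in unitmx ->
  char_poly (invmx P *m B *m P) = char_poly B.
Proof.
move=> Pu; rewrite /char_poly /char_poly_mx.
set f := (map_mx (@polyC F)).
have hX : ('X%:M : 'M[{poly F}]_n) = f (invmx P) *m 'X%:M *m f P.
  by rewrite scalar_mxC -mulmxA -map_mxM mulVmx // map_mx1 mulmx1.
rewrite [in LHS]hX.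
have -> : f (invmx P *m B *m P) = f (invmx P) *m f B *m f P.
  by rewrite /f !map_mxM.
rewrite -mulmxBl -mulmxBr !det_mulmx mulrC mulrA -det_mulmx.
by rewrite /f -map_mxM mulmxV // map_mx1 det1 mul1r.
Qed.

Section S.
Variable R : rcfType.
Local Open Scope sesquilinear_scope.
Local Notation toC := (real_complex R).

Lemma sym_spectral n (A : 'M[R]_n) : A^T = A ->
  exists r : 'I_n -> R,
   [/\ char_poly A = \prod_i ('X - (r i)%:P), \tr A = \sum_i r i &
     forall m, (forall i, r i <= m) -> forall x : 'cV[R]_n,
        (x^T *m A *m x) 0 0 <= m * \sum_i x i 0 ^+ 2].
Proof.
move=> As.
pose AC := map_mx toC A.
have Aher : AC \is hermsymmx.
  apply: realsym_hermsym.
    apply/is_hermitianmxP; rewrite expr0 scale1r; apply/matrixP => i j; rewrite !mxE -[in LHS]As mxE //.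
  by apply/mxOverP => i j; rewrite mxE; apply/complex_realP; exists (A i j).
have /hermitian_normalmx /orthomx_spectralP hA := Aher.
have Dreal := hermitian_spectral_diag_real Aher.
set P := spectralmx AC in hA; set D := spectral_diag AC in hA Dreal.
pose r i := @complex.Re R (D 0 i).
have hD i : D 0 i = toC (r i).
  by rewrite /r RRe_real //; move/mxOverP: Dreal; apply.
have Pu : P \in unitmx by apply: spectral_unit.
exists r; split.
- apply: (@map_poly_inj _ _ toC).
  rewrite map_char_poly -/AC hA char_poly_simil // char_poly_trig ?diag_mx_is_trig //.
  rewrite rmorph_prod; apply: eq_bigr => i _.
  by rewrite mxE eqxx mulr1n hD /= map_polyXsubC.
- transitivity (complex.Re (toC (\tr A))); first by [].
  rewrite -trace_map_mx -/AC hA mxtrace_mulC mulmxA mulmxV // mul1mx mxtrace_diag.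
  rewrite (eq_bigr (fun i => toC (r i))) //.
  by rewrite -rmorph_sum.
- move=> m hm x.
  pose xC := map_mx toC x.
  have cr : forall a : R, Num.conj_op (toC a) = toC a.
    by move=> a; apply: conj_Creal; apply/complex_realP; exists a.
  have xCr : xC \is a mxOver Num.real.
    by apply/mxOverP => i j; rewrite mxE; apply/complex_realP; exists (x i j).
  have PtP : (P ^t* ) *m P = 1%:M.
    by rewrite -invmx_unitary ?spectral_unitarymx // mulVmx.
  rewrite -lecR.
  have e1 : toC ((x^T *m A *m x) 0 0) = (xC^T *m AC *m xC) 0 0.
    by rewrite /xC /AC map_trmx -!map_mxM [RHS]mxE.
  rewrite e1 hA invmx_unitary ?spectral_unitarymx // -/P.
  pose y := P *m xC.
  have hz : xC^T *m (P ^t*) = y ^t*.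
    apply/matrixP => i j; rewrite !mxE rmorph_sum; apply: eq_bigr => k _.
    by rewrite !mxE rmorphM /= mulrC cr.
  have -> : xC^T *m (P ^t* *m diag_mx D *m P) *m xC = 
     y ^t* *m diag_mx D *m y.
    by rewrite !mulmxA hz -!mulmxA.
  have hn : toC (\sum_i x i 0 ^+ 2) = \sum_i `|y i 0| ^+ 2.
    transitivity ((y ^t* *m y) 0 0).
      rewrite -hz /y !mulmxA -(mulmxA _ _ P) PtP mulmx1 mxE rmorph_sum.
      by apply: eq_bigr => i _; rewrite !mxE rmorphXn.
    by rewrite mxE; apply: eq_bigr => i _; rewrite !mxE normCK mulrC.
  rewrite rmorphM /= hn mulr_sumr mul_mx_diag mxE.
  apply: ler_sum => i _; rewrite !mxE hD normCK.
  set Y := \sum_j _.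
  rewrite mulrC mulrA [m%:C%C * _]mulrC.
  by apply: ler_wpM2l; [exact: mul_conjC_ge0 | rewrite lecR].
Qed.
End S.
Lemma eigs_perm (R : realType) n (A : 'M[R]_n) (s : seq R) :
  char_poly A = \prod_(x <- s) ('X - x%:P) -> perm_eq (eigs A) s.
Proof.
move=> hp; rewrite /eigs perm_sort.
apply: perm_trans (perm_count_undup s).
have -> : [seq nseq (mup x (char_poly A)) x | x <- rootsR (char_poly A)] =
          [seq nseq (count_mem x s) x | x <- rootsR (char_poly A)].
  by apply: eq_map => x; rewrite hp mu_prod_XsubC.
apply/perm_flatten/perm_map/uniq_perm; rewrite ?undup_uniq ?uniq_roots //.
have pn0 : char_poly A != 0 by rewrite -size_poly_eq0 size_char_poly.
move=> x; rewrite -(roots_on_rootsR pn0) mem_undup in_itv /= hp.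
by rewrite root_prod_XsubC.
Qed.

Lemma key (R : realType) d (A : 'M[R]_d) : A^T = A -> (0 < d)%N ->
  (forall x : 'cV_d, (x^T *m A *m x) 0 0 <= lambda A 1 * norm2 x) /\
  \sum_(2 <= i < d.+1) lambda A i = \tr A - lambda A 1.
Proof.
move=> As d0; have [r [hp htr hray]] := @sym_spectral R _ _ As.
have hperm : perm_eq (eigs A) [seq r i | i <- index_enum 'I_d].
  by apply: eigs_perm; rewrite hp big_map.
have hsz : size (eigs A) = d by rewrite (perm_size hperm) size_map /index_enum; unlock; rewrite -enumT -cardT card_ord.
have hsort : sorted (fun x y : R => y <= x) (eigs A).
  by apply: sort_sorted => x y; exact: le_total.
case hE: (eigs A) hsz hsort hperm => [|e0 es] /=; first by move=> h; rewrite -h in d0.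
move=> [hes] hpath hperm.
have hall := order_path_min (fun b a c (hba : b <= a) (hcb : c <= b) => le_trans hcb hba) hpath.
have l1 : lambda A 1 = e0 by rewrite /lambda hE.
rewrite l1; split.
  move=> x; apply: hray => i.
  have : r i \in e0 :: es by rewrite (perm_mem hperm) map_f ?mem_index_enum.
  rewrite inE => /orP [/eqP -> //|]; by move/allP: hall => h /h.
rewrite htr.
have -> : \sum_i r i = \sum_(x <- e0 :: es) x.
  by rewrite (perm_big _ hperm) big_map.
rewrite big_cons [e0 + _]addrC addrK /lambda hE.
rewrite big_add1 /= big_add1 /= [in RHS](big_nth 0) -hes /=.
by [].
Qed.
Lemma sum_delta (R : pzRingType) n (i : 'I_n) (F : 'I_n -> R) :
  \sum_j (i == j)%:R * F j = F i.
Proof.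
rewrite (bigD1 i) //= eqxx mul1r big1 ?addr0 // => j ji.
by rewrite eq_sym (negbTE ji) mul0r.
Qed.

Lemma frob_expand (R : realType) d (B : 'M[R]_d) (x : 'cV_d) (s : R) :
  frob2 (B - (x *m x^T + s%:M)) = frob2 B - 2 * (x^T *m B *m x) 0 0
    + norm2 x ^+ 2 + d%:R * s ^+ 2 - 2 * s * \tr B + 2 * s * norm2 x.
Proof.
have e i j : (B - (x *m x^T + s%:M)) i j ^+ 2 =
   (B i j ^+ 2 - 2 * (x i 0 * B i j * x j 0) + x i 0 ^+ 2 * x j 0 ^+ 2)
   + (i == j)%:R * (s ^+ 2 - 2 * s * B i j + 2 * s * x i 0 ^+ 2).
  rewrite !mxE big_ord1 !mxE.
  have [->|nij] := eqVneq i j; rewrite ?eqxx ?(negbTE nij) ?mulr1n ?mulr0n /=; ring.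
rewrite /frob2.
rewrite (eq_bigr (fun i => \sum_j (B i j ^+ 2 - 2 * (x i 0 * B i j * x j 0)
    + x i 0 ^+ 2 * x j 0 ^+ 2) + (s ^+ 2 - 2 * s * B i i + 2 * s * x i 0 ^+ 2))); last first.
  move=> i _; have := @sum_delta R d i (fun j => s ^+ 2 - 2 * s * B i j + 2 * s * x i 0 ^+ 2).
  by move=> /= <-; rewrite -big_split /=; apply: eq_bigr => j _; rewrite e.
rewrite big_split /=.
have hq : (x^T *m B *m x) 0 0 = \sum_i \sum_j (x i 0 * B i j * x j 0).
  rewrite mxE exchange_big /=; apply: eq_bigr => j _; rewrite mxE mulr_suml.
  by apply: eq_bigr => i _; rewrite mxE.
have hn : norm2 x ^+ 2 = \sum_i \sum_j x i 0 ^+ 2 * x j 0 ^+ 2.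
  rewrite /norm2 expr2 mulr_suml; apply: eq_bigr => i _; by rewrite mulr_sumr.
have h1 : \sum_i \sum_j (B i j ^+ 2 - 2 * (x i 0 * B i j * x j 0) + x i 0 ^+ 2 * x j 0 ^+ 2)
   = \sum_i \sum_j B i j ^+ 2 - 2 * (x^T *m B *m x) 0 0 + norm2 x ^+ 2.
  rewrite hq hn mulr_sumr -sumrB -big_split /=; apply: eq_bigr => i _.
  by rewrite mulr_sumr -sumrB -big_split.
have h2 : \sum_(i < d) (s ^+ 2 - 2 * s * B i i + 2 * s * x i 0 ^+ 2)
   = d%:R * s ^+ 2 - 2 * s * \tr B + 2 * s * norm2 x.
  rewrite big_split sumrB /= sumr_const card_ord -mulr_natl /norm2 /mxtrace !mulr_sumr.
  by rewrite [d%:R * _]mulr_natl.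
apply: etrans; first by apply: (congr2 (fun a b => a + b) h1 h2).
ring.
Qed.
Lemma norm2Z (R : realType) d (a : R) (v : 'cV[R]_d) :
  norm2 (a *: v) = a ^+ 2 * norm2 v.
Proof.
by rewrite /norm2 mulr_sumr; apply: eq_bigr => i _; rewrite mxE exprMn.
Qed.

Lemma quadZ (R : realType) d (a : R) (B : 'M[R]_d) (v : 'cV[R]_d) :
  ((a *: v)^T *m B *m (a *: v)) 0 0 = a ^+ 2 * (v^T *m B *m v) 0 0.
Proof.
have -> : (a *: v)^T = a *: v^T by apply/matrixP => i j; rewrite !mxE.
by rewrite -!scalemxAl -scalemxAr !mxE expr2 -mulrA; congr (_ * _); rewrite mulr_sumr; apply: eq_bigr => j _; rewrite mxE mulrA.
Qed.

Lemma quad_eig (R : realType) d (l : R) (B : 'M[R]_d) (v : 'cV[R]_d) :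
  B *m v = l *: v -> (v^T *m B *m v) 0 0 = l * norm2 v.
Proof.
move=> hB; rewrite -mulmxA hB -scalemxAr mxE /norm2 mxE.
by congr (_ * _); apply: eq_bigr => i _; rewrite mxE expr2.
Qed.

Theorem lemma7 (R : realType) (d K : nat) (S : 'I_K -> 'M[R]_d)
  (v : 'I_K -> 'cV[R]_d) :
  (2 <= d)%N -> (0 < K)%N ->
  (forall k, sym_mx (S k) /\ psd (S k)) ->
  (forall j : 'I_K,
     (\sum_(k < K) \sum_(2 <= i < d.+1) lambda (S k) i) / (K%:R * (d%:R - 1))
       <= lambda (S j) 1) ->
  (forall k, S k *m v k = lambda (S k) 1 *: v k /\ norm2 (v k) = 1) ->
  let sigma2 := K%:R^-1 *
      \sum_(k < K) (\tr (S k) - lambda (S k) 1) / (d%:R - 1) in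
  let xg := fun k => Num.sqrt (lambda (S k) 1 - sigma2) *: v k in
  forall (x : 'I_K -> 'cV[R]_d) (s : R),
    gmm_obj S xg sigma2 <= gmm_obj S x s.
Proof.
move=> d2 K0 hS hyp hv sigma2 xg x s.
have d0 : (0 < d)%N by apply: ltnW.
pose lam k := lambda (S k) 1.
have hk k := @key R d (S k) (proj1 (hS k)) d0.
have hdm1 : (0 < d%:R - 1 :> R) by rewrite subr_gt0 ltr1n.
have hK : (0 < K%:R :> R) by rewrite ltr0n.
pose W := \sum_k (\tr (S k) - lam k).
have hsum : \sum_(k < K) \sum_(2 <= i < d.+1) lambda (S k) i = W.
  by apply: eq_bigr => k _; rewrite (hk k).2.
have hσ : sigma2 = W / (K%:R * (d%:R - 1)).
  rewrite /sigma2 -mulr_suml /W; field.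
  by apply/andP; split; rewrite lt0r_neq0.
have hle k : sigma2 <= lam k by rewrite hσ -hsum; apply: hyp.
pose g k t := frob2 (S k) - (lam k - t) ^+ 2 + d%:R * t ^+ 2 - 2 * t * \tr (S k).
have Eopt : gmm_obj S xg sigma2 = \sum_k g k sigma2.
  rewrite /gmm_obj; apply: eq_bigr => k _; rewrite frob_expand /xg.
  have [hSv hnv] := hv k.
  rewrite quadZ norm2Z (@quad_eig _ _ _ _ _ hSv) hnv sqr_sqrtr ?subr_ge0 ?hle //.
  rewrite /g /lam; ring.
have Elow : \sum_k g k s <= gmm_obj S x s.
  rewrite /gmm_obj; apply: ler_sum => k _; rewrite frob_expand.
  have hq := (hk k).1 (x k).
  have hn : 0 <= norm2 (x k) by apply: sumr_ge0 => i _; apply: sqr_ge0.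
  rewrite /g -/(lam k) in hq *.
  have sq := sqr_ge0 (norm2 (x k) - (lam k - s)).
  move: hq hn sq; set q := (_ 0 0); set n := norm2 _; set l := lam k => hq hn sq.
  nra.
rewrite Eopt; apply: le_trans Elow.
rewrite -subr_ge0 -sumrB.
have -> : \sum_k (g k s - g k sigma2) =
    \sum_k ((s - sigma2) * ((d%:R - 1) * (s + sigma2)) - 2 * (s - sigma2) * (\tr (S k) - lam k)).
  by apply: eq_bigr => k _; rewrite /g; ring.
rewrite sumrB sumr_const card_ord -mulr_sumr -/W.
have hW : W = sigma2 * (K%:R * (d%:R - 1)).
  rewrite hσ divfK // mulf_neq0 // lt0r_neq0 //.
rewrite hW.
have -> : (s - sigma2) * ((d%:R - 1) * (s + sigma2)) *+ K -
    2 * (s - sigma2) * (sigma2 * (K%:R * (d%:R - 1))) =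
    K%:R * (d%:R - 1) * (s - sigma2) ^+ 2.
  by rewrite -mulr_natl; ring.
by apply: mulr_ge0; [apply: mulr_ge0; apply: ltW | apply: sqr_ge0].
Qed.
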